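(* Consider optimal control problem OCP-1 (described in the context). The optimal control $u_*^1$ (given pointwise by maximization of the Hamiltonian along the optimal trajectory and adjoint function) is a continuous function on the interval $[0,T]$.
   Context: Parameters: $\beta_1,\beta_2,\gamma,\rho_1,\rho_2>0$; $\sigma_1,\sigma_2>0$ with $\sigma_1+\sigma_2=1$; $0\le u_{\max}<1$; weights $\alpha_1,\alpha_2\ge0$, $\alpha_3>0$; horizon $T>0$; initial values $s_0,e_0,i_0,j_0>0$ with $s_0+e_0+i_0+j_0\le 1$. The admissible controls are all Lebesgue measurable $u:[0,T]\to[0,u_{\max}]$. The state system is $s'=-s(\beta_1(1-u)^2i+\beta_2(1-u)j)$, $e'=s(\beta_1(1-u)^2i+\beta_2(1-u)j)-\gamma e$, $i'=\sigma_1\gamma e-\rho_1 i$, $j'=\sigma_2\gamma e-\rho_2 j$, with $s(0)=s_0,e(0)=e_0,i(0)=i_0,j(0)=j_0$. OCP-1 is the problem of minimizing $Q(u)=\alpha_1(e(T)+i(T)+j(T))+\alpha_2\int_0^T(e+i+j)\,dt+0.5\alpha_3\int_0^Tu^2\,dt$ over admissible controls. Its Hamiltonian is $H(s,e,i,j,\psi_1,\dots,\psi_4,u)=-s(\beta_1(1-u)^2i+\beta_2(1-u)j)(\psi_1-\psi_2)-\gamma e(\psi_2-\sigma_1\psi_3-\sigma_2\psi_4)-\rho_1 i\psi_3-\rho_2 j\psi_4-\alpha_2(e+i+j)-0.5\alpha_3u^2$. For an optimal control $u_*^1$ with optimal trajectory $(s_*^1,e_*^1,i_*^1,j_*^1)$,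 the adjoint function $\psi_*=(\psi_1^*,\dots,\psi_4^* )$ of the Pontryagin maximum principle is a nontrivial solution of $\psi_1'=(\beta_1(1-u_*^1)^2i_*^1+\beta_2(1-u_*^1)j_*^1)(\psi_1-\psi_2)$, $\psi_2'=\gamma(\psi_2-\sigma_1\psi_3-\sigma_2\psi_4)+\alpha_2$, $\psi_3'=\beta_1(1-u_*^1)^2s_*^1(\psi_1-\psi_2)+\rho_1\psi_3+\alpha_2$, $\psi_4'=\beta_2(1-u_*^1)s_*^1(\psi_1-\psi_2)+\rho_2\psi_4+\alpha_2$, with $\psi_1(T)=0$, $\psi_2(T)=\psi_3(T)=\psi_4(T)=-\alpha_1$, and $u_*^1(t)$ maximizes $H(s_*^1(t),e_*^1(t),i_*^1(t),j_*^1(t),\psi_*(t),u)$ over $u\in[0,u_{\max}]$. *)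

(* Defs.v *)
From mathcomp Require Import all_boot all_order all_algebra.
From mathcomp Require Import all_classical all_reals all_analysis.
Set Implicit Arguments. Unset Strict Implicit. Unset Printing Implicit Defensive.
Import Order.TTheory GRing.Theory Num.Theory.
Import numFieldNormedType.Exports.
Local Open Scope classical_set_scope.
Local Open Scope ring_scope.

(* The real line equipped with the Lebesgue (= completed, Caratheodory)
   sigma-algebra; its carrier is R itself. *)
Definition lebType (R : realType) :=
  caratheodory_type (R:=R) (@wlength R idfun)^*%mu.

Notation lmu := (@completed_lebesgue_measure _).

Record params (R : realType) := Params {
  beta1 : R; beta2 : R; gamma : R; rho1 : R; rho2 : R;
  sigma1 : R; sigma2 : R; umax : R;
  alpha1 : R; alpha2 : R; alpha3 : R;
  T : R; s0 : R; e0 : R; i0 : R; j0 : R }.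

Definition valid_params (R : realType) (p : params R) : Prop :=
  [/\ 0 < beta1 p, 0 < beta2 p, 0 < gamma p, 0 < rho1 p & 0 < rho2 p] /\
  [/\ 0 < sigma1 p, 0 < sigma2 p & sigma1 p + sigma2 p = 1] /\
  (0 <= umax p /\ umax p < 1) /\
  [/\ 0 <= alpha1 p, 0 <= alpha2 p & 0 < alpha3 p] /\
  0 < T p /\
  [/\ 0 < s0 p, 0 < e0 p, 0 < i0 p, 0 < j0 p &
      s0 p + e0 p + i0 p + j0 p <= 1].

Definition admissible (R : realType) (p : params R) (u : R -> R) : Prop :=
  measurable_fun (`[0, T p] : set (lebType R)) (u : lebType R -> R) /\
  (forall t, 0 <= t <= T p -> 0 <= u t <= umax p).

(* x is an (absolutely continuous, Caratheodory) solution of x' = F on [0,T]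
   with x(0) = x0, in integral form. *)
Definition solves_IVP (R : realType) (Tf x0 : R) (x F : R -> R) : Prop :=
  lmu.-integrable (`[0, Tf] : set (lebType R)) (EFin \o (F : lebType R -> R)) /\
  (forall t, 0 <= t <= Tf ->
     x t = x0 + Rintegral lmu (`[0, t] : set (lebType R)) (F : lebType R -> R)).

Definition solves_TVP (R : realType) (Tf xT : R) (x F : R -> R) : Prop :=
  lmu.-integrable (`[0, Tf] : set (lebType R)) (EFin \o (F : lebType R -> R)) /\
  (forall t, 0 <= t <= Tf ->
     x t = xT - Rintegral lmu (`[t, Tf] : set (lebType R)) (F : lebType R -> R)).

Definition foi (R : realType) (p : params R) (u i j : R -> R) (t : R) : R :=
  beta1 p * (1 - u t) ^+ 2 * i t + beta2 p * (1 - u t) * j t.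

Definition state_system (R : realType) (p : params R) (u s e i j : R -> R) : Prop :=
  [/\ solves_IVP (T p) (s0 p) s (fun t => - (s t * foi p u i j t)),
      solves_IVP (T p) (e0 p) e (fun t => s t * foi p u i j t - gamma p * e t),
      solves_IVP (T p) (i0 p) i (fun t => sigma1 p * gamma p * e t - rho1 p * i t) &
      solves_IVP (T p) (j0 p) j (fun t => sigma2 p * gamma p * e t - rho2 p * j t)].

Definition cost (R : realType) (p : params R) (u e i j : R -> R) : R :=
  alpha1 p * (e (T p) + i (T p) + j (T p))
  + alpha2 p * Rintegral lmu (`[0, T p] : set (lebType R))
                 ((fun t => e t + i t + j t) : lebType R -> R)
  + 2^-1 * alpha3 p * Rintegral lmu (`[0, T p] : set (lebType R))
                 ((fun t => u t ^+ 2) : lebType R -> R).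

Definition optimal (R : realType) (p : params R) (u s e i j : R -> R) : Prop :=
  [/\ admissible p u, state_system p u s e i j &
      forall v s' e' i' j', admissible p v -> state_system p v s' e' i' j' ->
        cost p u e i j <= cost p v e' i' j'].

Definition hamiltonian (R : realType) (p : params R)
    (s e i j ps1 ps2 ps3 ps4 u : R) : R :=
  - (s * (beta1 p * (1 - u) ^+ 2 * i + beta2 p * (1 - u) * j)) * (ps1 - ps2)
  - gamma p * e * (ps2 - sigma1 p * ps3 - sigma2 p * ps4)
  - rho1 p * i * ps3 - rho2 p * j * ps4
  - alpha2 p * (e + i + j) - 2^-1 * alpha3 p * u ^+ 2.

Definition adjoint_system (R : realType) (p : params R) (u s i j : R -> R)
    (ps1 ps2 ps3 ps4 : R -> R) : Prop :=
  [/\ solves_TVP (T p) 0 ps1 (fun t => foi p u i j t * (ps1 t - ps2 t)),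
      solves_TVP (T p) (- alpha1 p) ps2
        (fun t => gamma p * (ps2 t - sigma1 p * ps3 t - sigma2 p * ps4 t) + alpha2 p),
      solves_TVP (T p) (- alpha1 p) ps3
        (fun t => beta1 p * (1 - u t) ^+ 2 * s t * (ps1 t - ps2 t)
                  + rho1 p * ps3 t + alpha2 p) &
      solves_TVP (T p) (- alpha1 p) ps4
        (fun t => beta2 p * (1 - u t) * s t * (ps1 t - ps2 t)
                  + rho2 p * ps4 t + alpha2 p)].

Definition nontrivial (R : realType) (Tf : R) (ps1 ps2 ps3 ps4 : R -> R) : Prop :=
  exists t, 0 <= t <= Tf /\ (ps1 t <> 0 \/ ps2 t <> 0 \/ ps3 t <> 0 \/ ps4 t <> 0).

Definition max_condition (R : realType) (p : params R) (u s e i j : R -> R)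
    (ps1 ps2 ps3 ps4 : R -> R) : Prop :=
  forall t, 0 <= t <= T p -> forall v, 0 <= v <= umax p ->
    hamiltonian p (s t) (e t) (i t) (j t) (ps1 t) (ps2 t) (ps3 t) (ps4 t) v
    <= hamiltonian p (s t) (e t) (i t) (j t) (ps1 t) (ps2 t) (ps3 t) (ps4 t) (u t).

(* Main.v *)
Require Import Defs.
From mathcomp Require Import all_boot all_order all_algebra.
From mathcomp Require Import all_classical all_reals all_analysis.
From mathcomp Require Import ring lra.
Import Order.TTheory GRing.Theory Num.Theory.
Import numFieldNormedType.Exports.
Local Open Scope classical_set_scope.
Local Open Scope ring_scope.

Section S.
Context {R : realType}.
Notation L := (lebType R).

Lemma mitv (i : interval R) : measurable ([set` i] : set L).
Proof. apply: sub_caratheodory. exact: (@measurable_itv R i). Qed.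

Lemma lmu_itv (i : interval R) : lmu ([set` i] : set L) =
  (if i.1 < i.2 then (i.2 : \bar R) - i.1 else 0)%E.
Proof. exact: lebesgue_measure_itv. Qed.

Lemma lmu_cc (a b : R) : a <= b -> lmu (`[a, b] : set L) = (b - a)%:E.
Proof. move=> ab; rewrite lmu_itv /= lte_fin. case: ltgtP ab => //=.
 by move=> -> _; rewrite subrr.
Qed.

Lemma lmu_cc2 (a b : R) : a <= b ->
  (lmu : {measure set L -> \bar R}) (`[a, b]%classic : set L) = (b - a)%:E.
Proof. exact: lmu_cc. Qed.

Definition RI (a b : R) (F : R -> R) := Rintegral lmu (`[a, b] : set L) (F : L -> R).
Definition integ (a b : R) (F : R -> R) :=
  lmu.-integrable (`[a, b] : set L) (EFin \o (F : L -> R)).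

Lemma integS a b c d F : a <= c -> d <= b -> integ a b F -> integ c d F.
Proof.
move=> ac db; apply: integrableS; try exact: mitv.
by apply: subset_itv; rewrite bnd_simp.
Qed.

Lemma RI_pt a b r F : a <= r <= b -> integ a b F -> RI r r F = 0.
Proof.
move=> /andP[ar rb] iF; rewrite /RI /Rintegral null_set_integral //.
- exact: mitv.
- by case/integrableP: (@integS a b r r F ar rb iF).
- by have := @lmu_cc r r (lexx r); rewrite subrr.
Qed.

Lemma RI_split a r b F : a <= r <= b -> integ a b F ->
  RI a b F = Rintegral lmu (`[a, r[ : set L) (F : L -> R) + RI r b F.
Proof.
move=> /andP[ar rb] iF; rewrite /RI.
rewrite (@itv_bndbnd_setU _ _ (BLeft a) (BLeft r) (BRight b)) ?bnd_simp //.
rewrite Rintegral_setU //; try exact: mitv.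
- by rewrite -itv_bndbnd_setU ?bnd_simp.
- apply/disj_set2P; rewrite -subset0 => z/=; rewrite !in_itv/= => -[/andP[_ +] /andP[+ _]].
  by move=> h1 h2; move: (lt_le_trans h1 h2); rewrite ltxx.
Qed.

Lemma RI_split2 a r b F : a <= r <= b -> integ a b F ->
  RI a b F = RI a r F + RI r b F.
Proof.
move=> /andP[ar rb] iF.
rewrite (@RI_split a r b F) ?ar ?rb //.
rewrite [RI a r F](@RI_split a r r F) ?ar ?lexx //; last exact: (@integS a b a r F (lexx a) rb iF).
by rewrite (@RI_pt a b r F) ?ar ?rb // addr0.
Qed.
Definition cl (T t : R) := if t < 0 then 0 else if T < t then T else t.

Lemma cl_in T t : 0 <= T -> 0 <= cl T t <= T.
Proof. rewrite /cl => T0; case: ifP => h1; first by rewrite lexx T0.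
case: ifP => h2; first by rewrite T0 lexx.
by apply/andP; split; lra. Qed.

Lemma cl_id T t : 0 <= t <= T -> cl T t = t.
Proof. rewrite /cl => /andP[h1 h2]; case: ifP => h3; first lra.
case: ifP => h4 //; lra. Qed.

Lemma cl_lip T t y : 0 <= T -> `|cl T t - cl T y| <= `|t - y|.
Proof.
move=> T0; rewrite /cl.
have h := ler_norm (t - y); have h' := ler_norm (y - t); rewrite distrC in h'.
rewrite ler_norml.
case: (ltP t 0) => h1; case: (ltP y 0) => h2; try case: (ltP T t) => h3; try case: (ltP T y) => h4;
  apply/andP; split; lra.
Qed.
Lemma RI_small T F e : integ 0 T F -> 0 < e -> exists2 d, 0 < d &
  forall a b, 0 <= a -> a <= b -> b <= T -> b - a < d -> `|RI a b F| < e.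
Proof.
move=> iF e0.
have iT : lmu.-integrable setT (EFin \o ((F : L -> R) \_ (`[0,T] : set L))).
  by rewrite -restrict_EFin; apply/integrable_restrict => //=; [exact: mitv | rewrite setTI].
have [d [d0 Hd]] := integral_normr_continuous iT e0.
exists d => // a b a0 ab bT bad.
have iab : integ a b F by exact: integS iF.
apply: (le_lt_trans (le_normr_Rintegral _ _)) => //; first exact: mitv.
have := Hd (`[a, b]%classic : set L) (mitv _).
have hm : (lmu (`[a,b]%classic : set L) < d%:E)%E by rewrite lmu_cc // lte_fin.
move=> /(_ hm); apply: le_lt_trans.
rewrite le_eqVlt; apply/orP; left; apply/eqP.
apply: eq_Rintegral => z; rewrite inE /= => hz.
rewrite patchE ifT //; rewrite inE /=; move: hz; rewrite !in_itv /= => /andP[h1 h2].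
apply/andP; split; lra.
Qed.

Lemma RI_cont T F : 0 <= T -> integ 0 T F -> continuous (fun t => RI 0 (cl T t) F).
Proof.
move=> T0 iF x; apply/cvgrPdist_lt => e e0.
have [d d0 Hd] := @RI_small T F e iF e0.
exists d => //= y; rewrite /ball /= => hxy.
have hc := @cl_lip T x y T0.
have := @cl_in T x T0; have := @cl_in T y T0.
move: (cl T x) (cl T y) hc => a b hab /andP[b0 bT] /andP[a0 aT].
case: (leP a b) => h.
- rewrite (@RI_split2 0 a b F) ?a0 ?h //; last exact: integS iF.
  rewrite opprD addrA subrr sub0r normrN.
  apply: Hd => //. have := ler_norm (b - a); rewrite (distrC b a). lra.
- rewrite (@RI_split2 0 b a F) ?b0 ?(ltW h) //; last exact: integS iF.
  rewrite addrAC subrr add0r.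
  apply: Hd => //; first exact: ltW. have := ler_norm (a - b).
  lra.
Qed.
Lemma cont_pos_near (g : R -> R) s : continuous g -> 0 < g s ->
  exists2 dl, 0 < dl & forall y, `|s - y| < dl -> 0 < g y.
Proof.
move=> gc gs.
have := (gc s); move/cvgrPdist_lt => /(_ _ gs) /nbhs_ballP [dl dl0 Hdl].
exists dl => // y hy.
have := Hdl y; rewrite /ball /= => /(_ hy) h.
have := ler_norm (g s - g y). lra.
Qed.

Lemma cont_induction (g : R -> R) T : continuous g -> 0 <= T ->
  (forall t1, 0 <= t1 <= T -> (forall sg, 0 <= sg < t1 -> 0 < g sg) -> 0 < g t1) ->
  forall t, 0 <= t <= T -> 0 < g t.
Proof.
move=> gc T0 hyp t /andP[t0 tT].
rewrite ltNge; apply/negP => gt.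
pose A := [set r | forall sg, 0 <= sg <= r -> 0 < g sg].
have g0 : 0 < g 0.
  apply: hyp; first by rewrite lexx T0.
  by move=> sg /andP[h1 h2]; lra.
have A0 : A 0 by move=> sg /andP[h1 h2]; have -> : sg = 0 by lra.
have Aub : ubound A t.
  move=> r Ar; rewrite leNgt; apply/negP => tr.
  have := Ar t; rewrite t0 (ltW tr) => /(_ isT). lra.
have hs : has_sup A by split; [exists 0 | exists t].
have s0 : 0 <= sup A by exact: sup_upper_bound.
have st : sup A <= t by apply: ge_sup => //; exists 0.
have below : forall sg, 0 <= sg < sup A -> 0 < g sg.
  move=> sg /andP[h1 h2].
  have [r Ar hr] := @sup_adherent R A (sup A - sg) ltac:(lra) hs.
  apply: Ar; apply/andP; split; lra.
have gs : 0 < g (sup A) by apply: hyp => //; apply/andP; split; lra.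
have [dl dl0 Hdl] := @cont_pos_near g (sup A) gc gs.
have : A (sup A + dl / 2).
  move=> sg /andP[h1 h2].
  case: (ltP sg (sup A)) => h3; first by apply: below; apply/andP; split.
  apply: Hdl. rewrite ler0_norm; lra.
move/(sup_upper_bound hs). lra.
Qed.
Lemma integ_cst a b k : a <= b -> integ a b (fun=> k).
Proof.
move=> ab; apply: measurable_bounded_integrable.
- exact: mitv.
- by rewrite lmu_cc2 // ltry.
- exact: measurable_cst.
- exists `|k|; split => // M hM z _ /=. lra.
Qed.

Lemma RI_cst a b k : a <= b -> RI a b (fun=> k) = k * (b - a).
Proof. move=> ab; rewrite /RI Rintegral_cst; last exact: mitv.
by rewrite lmu_cc2.
Qed.
Lemma step_pos (X F : R -> R) T c t1 : continuous X -> integ 0 T F ->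
  (forall r t, 0 <= r -> r <= t -> t <= T -> X t = X r + RI r t F) ->
  0 < c -> 0 < t1 -> t1 <= T ->
  (forall sg, 0 <= sg < t1 -> 0 < X sg) ->
  (forall sg, 0 <= sg <= t1 -> - c * X sg <= F sg) -> 0 < X t1.
Proof.
move=> Xc iF XF c0 t10 t1T Xpos Fge.
pose k := (2 * c)^-1.
have k0 : 0 < k by rewrite invr_gt0; lra.
have kc : c * k = 2^-1 by rewrite /k invfM mulrA mulrC mulrA mulVf ?mul1r //; lra.
have [tau tau0 [taut1 tauk]] : exists2 tau, 0 <= tau & (tau < t1 /\ t1 - tau <= k).
  case: (lerP (t1 - k) 0) => h.
  - exists 0 => //; split; lra.
  - exists (t1 - k); [lra | split; lra].
have tl : tau <= t1 by exact: ltW.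
have [r rin rmax] := EVT_max tl (@continuous_subspaceT _ _ _ X Xc).
move: rin; rewrite in_itv /= => /andP[taur rt1].
have Xtau : 0 < X tau by apply: Xpos; apply/andP; split.
have Xr : X tau <= X r by apply: rmax; rewrite in_itv /= lexx tl.
have iF' : integ r t1 F by apply: integS iF; lra.
have : RI r t1 (fun=> - c * X r) <= RI r t1 F.
  apply: le_Rintegral => //; first exact: mitv.
  - exact: integ_cst.
  - move=> z; rewrite /= in_itv /= => /andP[h1 h2].
    apply: le_trans (Fge z _); last by apply/andP; split; lra.
    rewrite !mulNr lerN2 ler_pM2l //; apply: rmax.
    rewrite in_itv /=; apply/andP; split; lra.
rewrite RI_cst // (XF r t1) //; last lra.
have : c * X r * (t1 - r) <= c * X r * k.
  apply: ler_wpM2l; first by apply: mulr_ge0; lra.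
  lra.
have e2 : c * X r * k = X r / 2 by rewrite mulrAC kc mulrC.
rewrite e2 !mulNr => h1 h2. lra.
Qed.
Lemma cont_neg_near (g : R -> R) s : continuous g -> g s < 0 ->
  exists2 dl, 0 < dl & forall y, `|s - y| < dl -> g y < 0.
Proof.
move=> gc gs.
have gs' : 0 < - g s by lra.
have := (gc s); move/cvgrPdist_lt => /(_ _ gs') /nbhs_ballP [dl dl0 Hdl].
exists dl => // y hy.
have := Hdl y; rewrite /ball /= => /(_ hy) h.
have := ler_norm (g y - g s); rewrite distrC. lra.
Qed.

Lemma cont_ge0 (g : R -> R) t1 : continuous g -> 0 < t1 ->
  (forall sg, 0 <= sg < t1 -> 0 < g sg) -> 0 <= g t1.
Proof.
move=> gc t10 hp; rewrite leNgt; apply/negP => gt.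
have [dl dl0 Hdl] := @cont_neg_near g t1 gc gt.
case: (lerP dl t1) => h.
- have : g (t1 - dl / 2) < 0 by apply: Hdl; rewrite ger0_norm; lra.
  have : 0 < g (t1 - dl / 2) by apply: hp; apply/andP; split; lra.
  lra.
- have : g (t1 / 2) < 0 by apply: Hdl; rewrite ger0_norm; lra.
  have : 0 < g (t1 / 2) by apply: hp; apply/andP; split; lra.
  lra.
Qed.

Definition Kf (A B a3 v : R) := - (A * (1 - v) ^+ 2 + B * (1 - v)) - 2^-1 * a3 * v ^+ 2.
Definition Phi (um a3 A B : R) :=
  Order.min um (Order.max 0 ((2 * A + B) / (2 * Order.max A 0 + a3))).

Lemma Kf_diff A B a3 v w :
  Kf A B a3 v - Kf A B a3 w = (v - w) * ((2 * A + B) - (2 * A + a3) * 2^-1 * (v + w)).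
Proof. by rewrite /Kf; field. Qed.
Lemma Phi_prop um a3 A B : 0 < a3 -> 0 <= um < 1 ->
  ((0 <= A /\ 0 <= B) \/ (A <= 0 /\ B <= 0)) ->
  0 <= Phi um a3 A B <= um /\
  forall v, 0 <= v <= um -> v <> Phi um a3 A B ->
     Kf A B a3 v < Kf A B a3 (Phi um a3 A B).
Proof.
move=> a30 /andP[um0 um1] [[A0 B0]|[A0 B0]].
- have mA : Order.max A 0 = A by rewrite max_l.
  have D0 : 0 < 2 * A + a3 by lra.
  rewrite /Phi mA.
  set q := (2 * A + B) / (2 * A + a3).
  have q0 : 0 <= q by apply: divr_ge0; lra.
  have qD : q * (2 * A + a3) = 2 * A + B by rewrite /q divfK // lt0r_neq0.
  rewrite max_r //.
  case: (lerP q um) => hq.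
  + split; first by apply/andP.
    move=> v /andP[v0 vum] vq.
    have hp : 0 < (v - q) ^+ 2.
      rewrite exprn_even_gt0 // subr_eq0; apply/eqP => h; exact: vq.
    have e : Kf A B a3 v - Kf A B a3 q = - ((2 * A + a3) / 2 * (v - q) ^+ 2).
      by rewrite Kf_diff -qD; field.
    have : 0 < (2 * A + a3) / 2 * (v - q) ^+ 2 by apply: mulr_gt0 => //; lra.
    lra.
  +
    split; first by apply/andP; split.
    move=> v /andP[v0 vum] vq.
    have vlt : v < um by rewrite lt_neqAle vum andbT; apply/eqP.
    have e : Kf A B a3 v - Kf A B a3 um = - ((2 * A + a3) * ((um - v) * (q - (v + um) / 2))).
      by rewrite Kf_diff -qD; field.
    have : 0 < (2 * A + a3) * ((um - v) * (q - (v + um) / 2)).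
      by apply: mulr_gt0 => //; apply: mulr_gt0; lra.
    lra.
- have mA : Order.max A 0 = 0 by rewrite max_r.
  rewrite /Phi mA mulr0 add0r.
  have q0 : (2 * A + B) / a3 <= 0 by rewrite ler_pdivrMr // mul0r; lra.
  rewrite max_l // min_r //.
  split; first by rewrite lexx.
  move=> v /andP[v0 vum] v0'.
  have vp : 0 < v by rewrite lt_neqAle v0 andbT eq_sym; apply/eqP.
  have e : Kf A B a3 v - Kf A B a3 0 = v * (A * (2 - v) + B) - a3 / 2 * v ^+ 2.
    by rewrite /Kf; field.
  have h1 : A * (2 - v) <= 0 by apply: mulr_le0_ge0; lra.
  have h2 : v * (A * (2 - v) + B) <= 0 by apply: mulr_ge0_le0; lra.
  have h3 : 0 < a3 / 2 * v ^+ 2 by apply: mulr_gt0; [lra | exact: exprn_gt0].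
  lra.
Qed.
Lemma Phi_cont um a3 (A B : R -> R) : 0 < a3 -> continuous A -> continuous B ->
  continuous (fun t => Phi um a3 (A t) (B t)).
Proof.
move=> a30 cA cB x.
have c2A : {for x, continuous (fun t => 2 * A t)}.
  exact: (@continuousM _ _ (fun=> 2) A x (@cst_continuous _ _ _ x) (cA x)).
have cmA : {for x, continuous (fun t => Order.max (A t) 0)}.
  exact: (@continuous_max _ _ A (fun=> 0) x (cA x) (@cst_continuous _ _ _ x)).
have cden : {for x, continuous (fun t => 2 * Order.max (A t) 0 + a3)}.
  apply: (@continuousD _ _ _ (fun t => 2 * Order.max (A t) 0) (fun=> a3) x _ (@cst_continuous _ _ _ x)).
  exact: (@continuousM _ _ (fun=> 2) _ x (@cst_continuous _ _ _ x) cmA).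
have den0 : 2 * Order.max (A x) 0 + a3 != 0.
  apply: lt0r_neq0. have : 0 <= Order.max (A x) 0 by rewrite le_max lexx orbT. lra.
have cnum : {for x, continuous (fun t => 2 * A t + B t)}.
  exact: (@continuousD _ _ _ (fun t => 2 * A t) B x c2A (cB x)).
have cq : {for x, continuous (fun t => (2 * A t + B t) / (2 * Order.max (A t) 0 + a3))}.
  exact: (@continuousM _ _ _ _ x cnum (@continuousV _ _ _ x den0 cden)).
have cmx : {for x, continuous (fun t => Order.max 0 ((2 * A t + B t) / (2 * Order.max (A t) 0 + a3)))}.
  exact: (@continuous_max _ _ (fun=> 0) _ x (@cst_continuous _ _ _ x) cq).
exact: (@continuous_min _ _ (fun=> um) _ x (@cst_continuous _ _ _ x) cmx).
Qed.
Lemma IVP_glob T x0 (x F : R -> R) : 0 <= T -> solves_IVP T x0 x F ->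
  exists X, [/\ continuous X, (forall t, 0 <= t <= T -> x t = X t),
    (forall r t, 0 <= r -> r <= t -> t <= T -> X t = X r + RI r t F) & integ 0 T F].
Proof.
move=> T0 [iF hx].
have XX : forall t, 0 <= t <= T -> x0 + RI 0 (cl T t) F = x0 + RI 0 t F.
  by move=> t ht; rewrite cl_id.
exists (fun t => x0 + RI 0 (cl T t) F); split => //.
- move=> t; apply: (@continuousD _ _ _ (fun=> x0) _ t (@cst_continuous _ _ _ t)).
  exact: RI_cont.
- by move=> t ht; rewrite XX // hx.
- move=> r t r0 rt tT.
  rewrite XX ?r0 ?(le_trans rt tT) ?(le_trans r0 rt) // XX ?r0 ?(le_trans rt tT) //.
  rewrite (@RI_split2 0 r t F) ?r0 ?rt ?addrA //; exact: integS iF.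
Qed.

Lemma TVP_glob T xT (x F : R -> R) : 0 <= T -> solves_TVP T xT x F ->
  exists X, continuous X /\ (forall t, 0 <= t <= T -> x t = X t).
Proof.
move=> T0 [iF hx].
exists (fun t => xT - (RI 0 T F - RI 0 (cl T t) F)); split => //.
- move=> t; apply: (@continuousD _ _ _ (fun=> xT) _ t (@cst_continuous _ _ _ t)).
  apply: continuousN.
  apply: (@continuousD _ _ _ (fun=> RI 0 T F) _ t (@cst_continuous _ _ _ t)).
  apply: continuousN. exact: RI_cont.
- move=> t /andP[t0 tT]; rewrite cl_id ?t0 ?tT // hx ?t0 ?tT //.
  by rewrite (@RI_split2 0 t T F) ?t0 ?tT // addrAC subrr add0r.
Qed.
Lemma ham_K (p : params R) s e i j p1 p2 p3 p4 v w :
  hamiltonian p s e i j p1 p2 p3 p4 v - hamiltonian p s e i j p1 p2 p3 p4 w =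
  Kf (beta1 p * i * (s * (p1 - p2))) (beta2 p * j * (s * (p1 - p2))) (alpha3 p) v
  - Kf (beta1 p * i * (s * (p1 - p2))) (beta2 p * j * (s * (p1 - p2))) (alpha3 p) w.
Proof. rewrite /hamiltonian /Kf; ring. Qed.

Lemma u_eq (p : params R) s e i j p1 p2 p3 p4 u0 :
  0 < beta1 p -> 0 < beta2 p -> 0 < alpha3 p -> 0 <= umax p < 1 ->
  0 <= i -> 0 <= j -> 0 <= u0 <= umax p ->
  (forall v, 0 <= v <= umax p -> hamiltonian p s e i j p1 p2 p3 p4 v <=
                                hamiltonian p s e i j p1 p2 p3 p4 u0) ->
  u0 = Phi (umax p) (alpha3 p) (beta1 p * i * (s * (p1 - p2)))
           (beta2 p * j * (s * (p1 - p2))).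
Proof.
move=> b1 b2 a3 um i0 j0 u0in hmax.
set A := beta1 p * i * (s * (p1 - p2)).
set B := beta2 p * j * (s * (p1 - p2)).
have sg : (0 <= A /\ 0 <= B) \/ (A <= 0 /\ B <= 0).
  have bi : 0 <= beta1 p * i by apply: mulr_ge0 => //; exact: ltW.
  have bj : 0 <= beta2 p * j by apply: mulr_ge0 => //; exact: ltW.
  case: (leP 0 (s * (p1 - p2))) => h.
  - by left; split; apply: mulr_ge0.
  - by right; split; apply: mulr_ge0_le0 => //; exact: ltW.
have [Pin Pst] := @Phi_prop (umax p) (alpha3 p) A B a3 um sg.
apply/eqP; apply/negP => /negP /eqP hne.
have := Pst u0 u0in hne.
have := hmax _ Pin.
have := ham_K p s e i j p1 p2 p3 p4 (Phi (umax p) (alpha3 p) A B) u0.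
rewrite -/A -/B. lra.
Qed.
Lemma foi_bnd (b1 b2 uu ii jj Mi Mj : R) : 0 < b1 -> 0 < b2 -> 0 <= uu -> uu < 1 ->
  0 <= ii -> ii <= Mi -> 0 <= jj -> jj <= Mj ->
  0 <= b1 * (1 - uu) ^+ 2 * ii + b2 * (1 - uu) * jj <= b1 * Mi + b2 * Mj.
Proof.
move=> hb1 hb2 u0 u1 i0 iM j0 jM.
have h1 : 0 <= 1 - uu by lra.
have h2 : 1 - uu <= 1 by lra.
have h3 : (1 - uu) ^+ 2 <= 1 by rewrite exprn_ile1.
have h4 : 0 <= (1 - uu) ^+ 2 by exact: exprn_ge0.
have e1 : b1 * (1 - uu) ^+ 2 * ii <= b1 * Mi.
  rewrite -mulrA; apply: ler_wpM2l; first exact: ltW.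
  apply: (le_trans (y := 1 * ii)); last by rewrite mul1r.
  by apply: ler_wpM2r.
have e2 : b2 * (1 - uu) * jj <= b2 * Mj.
  rewrite -mulrA; apply: ler_wpM2l; first exact: ltW.
  apply: (le_trans (y := 1 * jj)); last by rewrite mul1r.
  by apply: ler_wpM2r.
have e3 : 0 <= b1 * (1 - uu) ^+ 2 * ii by apply: mulr_ge0 => //; apply: mulr_ge0 => //; exact: ltW.
have e4 : 0 <= b2 * (1 - uu) * jj by apply: mulr_ge0 => //; apply: mulr_ge0 => //; exact: ltW.
apply/andP; split; lra.
Qed.

Lemma prod_cont c (X Y Z W : R -> R) : continuous X -> continuous Y -> continuous Z ->
  continuous W -> continuous (fun t => c * X t * (Y t * (Z t - W t))).
Proof.
move=> cX cY cZ cW x.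
have h1 : {for x, continuous (fun t => c * X t)}.
  exact: (@continuousM _ _ (fun=> c) X x (@cst_continuous _ _ _ x) (cX x)).
have h2 : {for x, continuous (fun t => Z t - W t)}.
  exact: (@continuousD _ _ _ Z (fun t => - W t) x (cZ x) (continuousN (cW x))).
have h3 : {for x, continuous (fun t => Y t * (Z t - W t))}.
  exact: (@continuousM _ _ Y _ x (cY x) h2).
exact: (@continuousM _ _ _ _ x h1 h3).
Qed.
End S.

Theorem lemma5 (R : realType) (p : params R)
    (u s e i j ps1 ps2 ps3 ps4 : R -> R) :
  valid_params p ->
  optimal p u s e i j ->
  adjoint_system p u s i j ps1 ps2 ps3 ps4 ->
  nontrivial (T p) ps1 ps2 ps3 ps4 ->
  max_condition p u s e i j ps1 ps2 ps3 ps4 ->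
  {within `[0, T p], continuous u}.
Proof.
move=> [[b1 b2 g r1 r2] [[s1 s2 ss] [[um0 um1] [[a1 a2 a3] [Tp [hs0 he0 hi0 hj0 hsum]]]]]].
move=> [[_ ubd] [hS hE hI hJ] _] [hP1 hP2 hP3 hP4] _ hmax.
have T0 : 0 <= T p by exact: ltW.
have [S [cS eS dS iS]] := IVP_glob _ _ _ _ T0 hS.
have [E [cE eE dE iE]] := IVP_glob _ _ _ _ T0 hE.
have [I [cI eI dI iI]] := IVP_glob _ _ _ _ T0 hI.
have [J [cJ eJ dJ iJ]] := IVP_glob _ _ _ _ T0 hJ.
have [P1 [cP1 eP1]] := TVP_glob _ _ _ _ T0 hP1.
have [P2 [cP2 eP2]] := TVP_glob _ _ _ _ T0 hP2.
have [ci ciin cimax] := EVT_max (a:=0) (b:=T p) T0 (@continuous_subspaceT _ _ _ I cI).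
have [cj cjin cjmax] := EVT_max (a:=0) (b:=T p) T0 (@continuous_subspaceT _ _ _ J cJ).
have inT : forall t, 0 <= t <= T p -> t \in `[0, T p] by move=> t ht; rewrite in_itv.
pose gg t := Order.min (Order.min (S t) (E t)) (Order.min (I t) (J t)).
have cg : continuous gg.
  move=> x.
  apply: (@continuous_min _ _ (fun t => Order.min (S t) (E t)) (fun t => Order.min (I t) (J t)) x).
  - exact: (@continuous_min _ _ S E x (cS x) (cE x)).
  - exact: (@continuous_min _ _ I J x (cI x) (cJ x)).
have gpos := @cont_induction R gg (T p) cg T0.
have Ub t : 0 <= t <= T p -> 0 <= u t /\ u t < 1.
  move=> ht; have /andP[h1 h2] := ubd t ht; split => //; lra.
have Mi t : 0 <= t <= T p -> I t <= `|I ci|.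
  by move=> ht; apply: le_trans (cimax t (inT t ht)) _; exact: ler_norm.
have Mj t : 0 <= t <= T p -> J t <= `|J cj|.
  by move=> ht; apply: le_trans (cjmax t (inT t ht)) _; exact: ler_norm.
have pos : forall t, 0 <= t <= T p -> 0 < gg t.
  apply: gpos => t1 /andP[t10 t1T] hbelow.
  have pe : forall sg, 0 <= sg < t1 -> [/\ 0 < S sg, 0 < E sg, 0 < I sg & 0 < J sg].
    move=> sg hsg; have := hbelow sg hsg; rewrite /gg !lt_min => /andP[/andP[-> ->] /andP[-> ->]].
    by [].
  have [t1z|t1p] := eqVneq t1 0.
  - rewrite t1z /gg !lt_min.
    have z0 : (0:R) <= 0 <= T p by apply/andP; split.
    rewrite -eS // -eE // -eI // -eJ //.
    rewrite hS.2 // hE.2 // hI.2 // hJ.2 //.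
    have z F : integ 0 (T p) F -> Rintegral lmu (`[0, 0]%classic : set (lebType R)) (F : lebType R -> R) = 0.
      by move=> iF; exact: (@RI_pt R 0 (T p) 0 F z0 iF).
    rewrite !z // !addr0 hs0 he0 hi0 hj0.
    by [].
  have t1p' : 0 < t1 by rewrite lt_neqAle eq_sym t1p t10.
  have inT' sg : 0 <= sg <= t1 -> 0 <= sg <= T p.
    by move=> /andP[h1 h2]; apply/andP; split => //; lra.
  have nn (X : R -> R) : continuous X -> (forall sg, 0 <= sg < t1 -> 0 < X sg) ->
      forall sg, 0 <= sg <= t1 -> 0 <= X sg.
    move=> cX hX sg /andP[h1 h2]; case: (ltP sg t1) => h.
    - by apply: ltW; apply: hX; apply/andP; split.
    - have -> : sg = t1 by lra.
      exact: (@cont_ge0 R X t1 cX t1p' hX).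
  have Sp sg : 0 <= sg < t1 -> 0 < S sg by move=> h; case: (pe sg h).
  have Ep sg : 0 <= sg < t1 -> 0 < E sg by move=> h; case: (pe sg h).
  have Ip sg : 0 <= sg < t1 -> 0 < I sg by move=> h; case: (pe sg h).
  have Jp sg : 0 <= sg < t1 -> 0 < J sg by move=> h; case: (pe sg h).
  have Sn := nn S cS Sp; have En := nn E cE Ep; have In := nn I cI Ip; have Jn := nn J cJ Jp.
  have foiB sg : 0 <= sg <= t1 ->
      0 <= foi p u i j sg <= beta1 p * `|I ci| + beta2 p * `|J cj|.
    move=> hsg; have hT := inT' sg hsg; rewrite /foi (eI sg hT) (eJ sg hT).
    have [u0 u1] := Ub sg hT.
    exact: (@foi_bnd R _ _ _ _ _ _ _ b1 b2 u0 u1 (In sg hsg) (Mi sg hT) (Jn sg hsg) (Mj sg hT)).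
  have St : 0 < S t1.
    have c0 : 0 < beta1 p * `|I ci| + beta2 p * `|J cj| + 1.
      have : 0 <= beta1 p * `|I ci| by apply: mulr_ge0 => //; exact: ltW.
      have : 0 <= beta2 p * `|J cj| by apply: mulr_ge0 => //; exact: ltW.
      lra.
    apply: (@step_pos R S _ (T p) _ t1 cS iS dS c0 t1p' t1T Sp).
    move=> sg hsg /=; have hT := inT' sg hsg; rewrite (eS sg hT).
    have /andP[f0 f1] := foiB sg hsg; have := Sn sg hsg. nra.
  have Et : 0 < E t1.
    apply: (@step_pos R E _ (T p) _ t1 cE iE dE g t1p' t1T Ep).
    move=> sg hsg /=; have hT := inT' sg hsg; rewrite (eS sg hT) (eE sg hT).
    have /andP[f0 f1] := foiB sg hsg; have := Sn sg hsg. nra.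
  have It : 0 < I t1.
    apply: (@step_pos R I _ (T p) _ t1 cI iI dI r1 t1p' t1T Ip).
    move=> sg hsg /=; have hT := inT' sg hsg; rewrite (eE sg hT) (eI sg hT).
    have := En sg hsg. have : 0 < sigma1 p * gamma p by exact: mulr_gt0. nra.
  have Jt : 0 < J t1.
    apply: (@step_pos R J _ (T p) _ t1 cJ iJ dJ r2 t1p' t1T Jp).
    move=> sg hsg /=; have hT := inT' sg hsg; rewrite (eE sg hT) (eJ sg hT).
    have := En sg hsg. have : 0 < sigma2 p * gamma p by exact: mulr_gt0. nra.
  by rewrite /gg !lt_min St Et It Jt.
have Ipos t : 0 <= t <= T p -> 0 <= i t.
  move=> ht; rewrite (eI t ht); have := pos t ht; rewrite /gg !lt_min.
  by case/andP => _ /andP[h _]; exact: ltW.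
have Jpos t : 0 <= t <= T p -> 0 <= j t.
  move=> ht; rewrite (eJ t ht); have := pos t ht; rewrite /gg !lt_min.
  by case/andP => _ /andP[_ h]; exact: ltW.
apply: (@subspace_eq_continuous _ _ _
  (fun t => Phi (umax p) (alpha3 p) (beta1 p * I t * (S t * (P1 t - P2 t)))
                                   (beta2 p * J t * (S t * (P1 t - P2 t)))) u).
- move=> t; rewrite inE /= in_itv /= => ht.
  rewrite -(eI t ht) -(eJ t ht) -(eS t ht) -(eP1 t ht) -(eP2 t ht).
  apply/esym/u_eq => //.
  + by apply/andP; split.
  + exact: Ipos.
  + exact: Jpos.
  + exact: ubd.
  + exact: hmax.
- apply: continuous_subspaceT; apply: Phi_cont => //; exact: prod_cont.
Qed.
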